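(* If $H(P)\ge\sum_{i=1}^N\pi_i\frac{\beta_i^2}{2}$, then $\underline\zeta=0$. Otherwise, $\underline\zeta$ equals the optimal value of the convex optimization problem $$\text{minimize}_{\theta\in\Delta}\quad -\sum_{(i,j)\in E}\theta_{ij}\log P_{ij}+R(\theta)-2\sqrt{R(\theta)}\sqrt{H(\theta)},\qquad R(\theta):=\sum_{i=1}^N\overline\theta_i\frac{\beta_i^2}{2};$$ in particular, the objective of this problem is a convex function on the convex set $\Delta$.
   Context: $V=\{1,\dots,N\}$; $P$ row-stochastic irreducible aperiodic with stationary distribution $\pi>0$; $E=\{(i,j):P_{ij}>0\}$; $\beta\in\mathbb R^N$. $\Delta=\{\theta\in\mathbb R^{N\times N}:\theta_{ij}\ge0,\sum_{i,j}\theta_{ij}=1,\sum_j\theta_{ij}=\sum_j\theta_{ji}\forall i,\theta_{ij}=0\text{ if }(i,j)\notin E\}$, $\overline\theta=\theta\mathbf1$. $H(\theta)=-\sum\theta_{ij}\log(\theta_{ij}/\overline\theta_i)$, $D(\theta\|P)=\sum\theta_{ij}\log(\theta_{ij}/(\overline\theta_iP_{ij}))$ ($0\log0=0$). $H(P):=-\sum_{i,j}\pi_iP_{ij}\log P_{ij}$ (i.e., $H$ evaluated at $\theta_{ij}=\pi_iP_{ij}$). $J_\theta(\xi)=\sum_{i:\overline\theta_i>0}\xi_i^2/(2\overline\theta_i)$ if $\xi_i=0$ whenever $\overline\theta_i=0$, else $+\infty$. $\underline\zeta$ is the infimum of $D(\theta\|P)+\sum_{i:\overline\theta_i>0}\overline\theta_i(\beta_i-\xi_i/\overline\theta_i)^2/2$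 over $\theta\in\Delta$, $\xi\in\mathbb R^N$ subject to $H(\theta)\ge J_\theta(\xi)$. *)

(* Defs.v *)
(* classical reals. Indices of V = {1..N} are represented as
   nat indices 0..N-1; vectors/matrices are functions nat -> R / nat -> nat -> R,
   and only their entries with indices < N are ever used. *)
From Stdlib Require Import Reals Lra Lia Arith.
Open Scope R_scope.

Fixpoint sumR (n : nat) (f : nat -> R) : R :=
  match n with O => 0 | S k => sumR k f + f k end.

Definition xlog (x y : R) : R :=
  if Rlt_dec 0 x then x * ln (x / y) else 0.

Fixpoint mpow (N : nat) (P : nat -> nat -> R) (n : nat) (i j : nat) : R :=
  match n with
  | O => if Nat.eq_dec i j then 1 else 0
  | S k => sumR N (fun l => mpow N P k i l * P l j)
  end.

Definition row_stochastic (N : nat) (P : nat -> nat -> R) : Prop :=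
  (forall i j, (i < N)%nat -> (j < N)%nat -> 0 <= P i j) /\
  (forall i, (i < N)%nat -> sumR N (fun j => P i j) = 1).

Definition irreducible (N : nat) (P : nat -> nat -> R) : Prop :=
  forall i j, (i < N)%nat -> (j < N)%nat -> exists n, 0 < mpow N P n i j.

(* every state has period 1: gcd { n >= 1 : (P^n)_{ii} > 0 } = 1 *)
Definition aperiodic (N : nat) (P : nat -> nat -> R) : Prop :=
  forall i, (i < N)%nat ->
    forall d : nat,
      (forall n, (0 < n)%nat -> 0 < mpow N P n i i -> Nat.divide d n) ->
      d = 1%nat.

Definition stationary (N : nat) (P : nat -> nat -> R) (pi : nat -> R) : Prop :=
  (forall i, (i < N)%nat -> 0 < pi i) /\
  sumR N pi = 1 /\
  (forall j, (j < N)%nat -> sumR N (fun i => pi i * P i j) = pi j).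

Definition tbar (N : nat) (theta : nat -> nat -> R) (i : nat) : R :=
  sumR N (fun j => theta i j).

Definition inDelta (N : nat) (P : nat -> nat -> R) (theta : nat -> nat -> R) : Prop :=
  (forall i j, (i < N)%nat -> (j < N)%nat -> 0 <= theta i j) /\
  sumR N (fun i => sumR N (fun j => theta i j)) = 1 /\
  (forall i, (i < N)%nat ->
     sumR N (fun j => theta i j) = sumR N (fun j => theta j i)) /\
  (forall i j, (i < N)%nat -> (j < N)%nat -> ~ (0 < P i j) -> theta i j = 0).

Definition Hent (N : nat) (theta : nat -> nat -> R) : R :=
  - sumR N (fun i => sumR N (fun j => xlog (theta i j) (tbar N theta i))).

Definition Dkl (N : nat) (theta P : nat -> nat -> R) : R :=
  sumR N (fun i => sumR N (fun j => xlog (theta i j) (tbar N theta i * P i j))).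

Definition HP (N : nat) (P : nat -> nat -> R) (pi : nat -> R) : R :=
  Hent N (fun i j => pi i * P i j).

(* The constraint H(theta) >= J_theta(xi), where J_theta(xi) = +oo unless
   xi_i = 0 whenever theta-bar_i = 0. *)
Definition J_constraint (N : nat) (theta : nat -> nat -> R) (xi : nat -> R) : Prop :=
  (forall i, (i < N)%nat -> tbar N theta i = 0 -> xi i = 0) /\
  sumR N (fun i => if Rlt_dec 0 (tbar N theta i)
                   then (xi i) ^ 2 / (2 * tbar N theta i) else 0)
  <= Hent N theta.

Definition zeta_obj (N : nat) (P : nat -> nat -> R) (beta : nat -> R)
  (theta : nat -> nat -> R) (xi : nat -> R) : R :=
  Dkl N theta P +
  sumR N (fun i => if Rlt_dec 0 (tbar N theta i)
                   then tbar N theta i * (beta i - xi i / tbar N theta i) ^ 2 / 2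
                   else 0).

Definition zeta_values (N : nat) (P : nat -> nat -> R) (beta : nat -> R) (z : R) : Prop :=
  exists theta xi, inDelta N P theta /\ J_constraint N theta xi /\
                   z = zeta_obj N P beta theta xi.

Definition is_inf (S : R -> Prop) (m : R) : Prop :=
  (forall x, S x -> m <= x) /\
  (forall m', (forall x, S x -> m' <= x) -> m' <= m).

Definition Rfun (N : nat) (beta : nat -> R) (theta : nat -> nat -> R) : R :=
  sumR N (fun i => tbar N theta i * (beta i) ^ 2 / 2).

Definition conv_obj (N : nat) (P : nat -> nat -> R) (beta : nat -> R)
  (theta : nat -> nat -> R) : R :=
  - sumR N (fun i => sumR N (fun j =>
        if Rlt_dec 0 (P i j) then theta i j * ln (P i j) else 0))
  + Rfun N beta theta
  - 2 * sqrt (Rfun N beta theta) * sqrt (Hent N theta).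

Definition conv_values (N : nat) (P : nat -> nat -> R) (beta : nat -> R) (z : R) : Prop :=
  exists theta, inDelta N P theta /\ z = conv_obj N P beta theta.

Definition mix (t : R) (th1 th2 : nat -> nat -> R) : nat -> nat -> R :=
  fun i j => t * th1 i j + (1 - t) * th2 i j.

(* Main.v *)
Require Import Defs.
From Stdlib Require Import Reals Lra Lia Arith FunctionalExtensionality Classical.
Open Scope R_scope.

Lemma sumR_ext n f g : (forall i, (i < n)%nat -> f i = g i) -> sumR n f = sumR n g.
Proof. induction n; simpl; intros H; [reflexivity|]. rewrite IHn by (intros; apply H; lia). rewrite H by lia. reflexivity. Qed.

Lemma sumR_lin n (a b : R) f g : sumR n (fun i => a * f i + b * g i) = a * sumR n f + b * sumR n g.
Proof. induction n; simpl; [ring|]. rewrite IHn. ring. Qed.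

Lemma sumR_plus n f g : sumR n (fun i => f i + g i) = sumR n f + sumR n g.
Proof. induction n; simpl; [ring|]. rewrite IHn. ring. Qed.

Lemma sumR_scal n (a : R) f : sumR n (fun i => a * f i) = a * sumR n f.
Proof. induction n; simpl; [ring|]. rewrite IHn. ring. Qed.

Lemma sumR_opp n f : sumR n (fun i => - f i) = - sumR n f.
Proof. induction n; simpl; [ring|]. rewrite IHn. ring. Qed.

Lemma sumR_zero n : sumR n (fun _ => 0) = 0.
Proof. induction n; simpl; [ring|]. rewrite IHn. ring. Qed.

Lemma sumR_le n f g : (forall i, (i < n)%nat -> f i <= g i) -> sumR n f <= sumR n g.
Proof. induction n; simpl; intros H; [lra|]. assert (H1 := H n ltac:(lia)). assert (sumR n f <= sumR n g) by (apply IHn; intros; apply H; lia). lra. Qed.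

Lemma sumR_nonneg n f : (forall i, (i < n)%nat -> 0 <= f i) -> 0 <= sumR n f.
Proof. intros H. rewrite <- (sumR_zero n). apply sumR_le. auto. Qed.

Lemma sumR_ge_term n f k : (forall i, (i < n)%nat -> 0 <= f i) -> (k < n)%nat -> f k <= sumR n f.
Proof. induction n; simpl; intros H Hk; [lia|].
  destruct (Nat.eq_dec k n) as [->|Hne].
  - assert (0 <= sumR n f) by (apply sumR_nonneg; intros; apply H; lia). lra.
  - assert (f k <= sumR n f) by (apply IHn; [intros; apply H; lia| lia]). assert (0 <= f n) by (apply H; lia). lra.
Qed.

Lemma sumR_swap n m f : sumR n (fun i => sumR m (fun j => f i j)) = sumR m (fun j => sumR n (fun i => f i j)).
Proof. induction n; simpl. - rewrite sumR_zero. reflexivity. - rewrite IHn. rewrite <- sumR_plus. reflexivity. Qed.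

Lemma ln_le_sub1 y : 0 < y -> ln y <= y - 1.
Proof. intros Hy. pose proof (exp_ineq1_le (ln y)). rewrite exp_ln in H by lra. lra. Qed.

Lemma xlog_pos x y : 0 < x -> xlog x y = x * ln (x / y).
Proof. intros H. unfold xlog. destruct (Rlt_dec 0 x); [reflexivity|lra]. Qed.

Lemma xlog_npos x y : ~ 0 < x -> xlog x y = 0.
Proof. intros H. unfold xlog. destruct (Rlt_dec 0 x); [lra|reflexivity]. Qed.

Lemma xlog_self x : xlog x x = 0.
Proof. unfold xlog. destruct (Rlt_dec 0 x); [|reflexivity]. replace (x / x) with 1 by (field; lra). rewrite ln_1. ring. Qed.

Lemma xlog_le0 x y : 0 <= x -> x <= y -> xlog x y <= 0.
Proof. intros H1 H2. unfold xlog. destruct (Rlt_dec 0 x); [|lra].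
  assert (ln (x / y) <= 0).
  { destruct (Req_dec x y) as [->|]. replace (y/y) with 1 by (field; lra). rewrite ln_1; lra.
    left. rewrite <- ln_1. apply ln_increasing. apply Rdiv_lt_0_compat; lra.
    apply Rmult_lt_reg_r with y. lra. unfold Rdiv. rewrite Rmult_assoc, Rinv_l by lra. lra. }
  nra. Qed.

Lemma xlog_scale c x y : 0 <= c -> xlog (c * x) (c * y) = c * xlog x y.
Proof. intros Hc. destruct (Req_dec c 0) as [->|Hc0].
  { rewrite !Rmult_0_l. apply xlog_npos. lra. }
  unfold xlog. destruct (Rlt_dec 0 (c*x)); destruct (Rlt_dec 0 x).
  - destruct (Req_dec y 0) as [->|Hy].
    + unfold Rdiv. rewrite Rmult_0_r, Rinv_0, !Rmult_0_r. ring.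
    + replace (c * x / (c * y)) with (x / y) by (field; lra). ring.
  - exfalso. nra.
  - exfalso. apply n. apply Rmult_lt_0_compat; lra.
  - ring.
Qed.

Lemma logsum_term a b A B : 0 <= a -> 0 <= b -> (0 < a -> 0 < b) -> 0 < A -> 0 < B ->
  a * ln (A / B) - xlog a b <= A * b / B - a.
Proof. intros Ha Hb Hab HA HB. destruct (Rlt_dec 0 a) as [Ha'|Ha'].
  - rewrite xlog_pos by lra. specialize (Hab Ha').
    assert (E : a * ln (A / B) - a * ln (a / b) = a * ln (A * b / (B * a))).
    { rewrite <- Rmult_minus_distr_l. f_equal.
      replace (A * b / (B * a)) with ((A / B) * / (a / b)) by (field; lra).
      rewrite ln_mult, ln_Rinv; try (apply Rdiv_lt_0_compat; lra); try apply Rinv_0_lt_compat; try (apply Rdiv_lt_0_compat; lra). ring. }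
    rewrite E. assert (0 < A * b / (B * a)) by (apply Rdiv_lt_0_compat; nra).
    pose proof (ln_le_sub1 _ H).
    apply Rle_trans with (a * (A * b / (B * a) - 1)). apply Rmult_le_compat_l; lra.
    right. field. lra.
  - rewrite xlog_npos by lra. assert (a = 0) by lra. subst. 
    assert (0 <= A * b / B) by (apply Rmult_le_pos; [nra| left; apply Rinv_0_lt_compat; lra]). lra.
Qed.

Lemma logsum n a b : (forall i, (i < n)%nat -> 0 <= a i /\ 0 <= b i /\ (0 < a i -> 0 < b i)) ->
  0 < sumR n a -> 0 < sumR n b ->
  xlog (sumR n a) (sumR n b) <= sumR n (fun i => xlog (a i) (b i)).
Proof. intros H HA HB. set (A := sumR n a) in *. set (B := sumR n b) in *.
  assert (sumR n (fun i => a i * ln (A / B) - xlog (a i) (b i)) <= sumR n (fun i => A * b i / B - a i)).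
  { apply sumR_le. intros i Hi. destruct (H i Hi) as (?&?&?). apply logsum_term; auto. }
  replace (sumR n (fun i => A * b i / B - a i)) with ((A / B) * sumR n b + (-1) * sumR n a) in H0
    by (rewrite <- sumR_lin; apply sumR_ext; intros; field; lra).
  replace (sumR n (fun i => a i * ln (A / B) - xlog (a i) (b i))) with (ln (A/B) * sumR n a + (-1) * sumR n (fun i => xlog (a i) (b i))) in H0
    by (rewrite <- sumR_lin; apply sumR_ext; intros; ring).
  fold A B in H0. rewrite xlog_pos by lra.
  replace (A / B * B) with A in H0 by (field; lra). lra.
Qed.

Lemma logsum2 a1 a2 b1 b2 : 0 <= a1 -> 0 <= a2 -> 0 <= b1 -> 0 <= b2 -> (0 < a1 -> 0 < b1) -> (0 < a2 -> 0 < b2) ->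
  xlog (a1 + a2) (b1 + b2) <= xlog a1 b1 + xlog a2 b2.
Proof. intros. destruct (Rlt_dec 0 (a1 + a2)).
  - assert (0 < b1 + b2). { destruct (Rlt_dec 0 a1). specialize (H3 r0). lra. assert (0 < a2) by lra. specialize (H4 H5). lra. }
    pose proof (logsum_term a1 b1 (a1+a2) (b1+b2) H H1 H3 r H5).
    pose proof (logsum_term a2 b2 (a1+a2) (b1+b2) H0 H2 H4 r H5).
    rewrite xlog_pos by lra.
    assert (E : (a1 + a2) * b1 / (b1 + b2) + (a1 + a2) * b2 / (b1 + b2) = a1 + a2) by (field; lra). lra.
  - rewrite xlog_npos by auto. assert (a1 = 0) by lra. assert (a2 = 0) by lra. subst.
    rewrite !xlog_npos by lra. lra.
Qed.

Lemma xlog_convex t x1 y1 x2 y2 : 0 <= t <= 1 -> 0 <= x1 -> 0 <= y1 -> 0 <= x2 -> 0 <= y2 ->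
  (0 < x1 -> 0 < y1) -> (0 < x2 -> 0 < y2) ->
  xlog (t * x1 + (1 - t) * x2) (t * y1 + (1 - t) * y2) <= t * xlog x1 y1 + (1 - t) * xlog x2 y2.
Proof. intros Ht H1 H2 H3 H4 H5 H6. rewrite <- (xlog_scale t x1 y1), <- (xlog_scale (1-t) x2 y2) by lra.
  apply logsum2; try nra.
Qed.

Lemma sumR_sub n f g : sumR n (fun i => f i - g i) = sumR n f - sumR n g.
Proof. induction n; simpl; [ring|]. rewrite IHn. ring. Qed.

Definition Lt (N : nat) (P theta : nat -> nat -> R) : R :=
  sumR N (fun i => sumR N (fun j => if Rlt_dec 0 (P i j) then theta i j * ln (P i j) else 0)).

Section D.
Variables (N : nat) (P : nat -> nat -> R).

Lemma le_tbar th i j : inDelta N P th -> (i < N)%nat -> (j < N)%nat -> th i j <= tbar N th i.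
Proof. intros (H1&_) Hi Hj. unfold tbar. apply (sumR_ge_term N (fun j => th i j)); auto. Qed.

Lemma tbar_nonneg th i : inDelta N P th -> (i < N)%nat -> 0 <= tbar N th i.
Proof. intros (H1&_) Hi. unfold tbar. apply sumR_nonneg; auto. Qed.

Lemma pos_imp th i j : inDelta N P th -> (i < N)%nat -> (j < N)%nat -> 0 < th i j -> 0 < tbar N th i /\ 0 < P i j.
Proof. intros HD Hi Hj Hp. split. pose proof (le_tbar th i j HD Hi Hj). lra.
  destruct (Rlt_dec 0 (P i j)); auto. destruct HD as (_&_&_&H4). rewrite H4 in Hp by auto. lra. Qed.

Lemma Hent_nonneg th : inDelta N P th -> 0 <= Hent N th.
Proof. intros HD. unfold Hent. cut (sumR N (fun i => sumR N (fun j => xlog (th i j) (tbar N th i))) <= 0). lra.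
  rewrite <- (sumR_zero N). apply sumR_le. intros i Hi. rewrite <- (sumR_zero N). apply sumR_le. intros j Hj.
  apply xlog_le0. destruct HD as (H1&_); auto. apply le_tbar; auto. Qed.

Lemma Dkl_nonneg th : row_stochastic N P -> inDelta N P th -> 0 <= Dkl N th P.
Proof. intros [HP1 HP2] HD. unfold Dkl. apply sumR_nonneg. intros i Hi.
  destruct (Rlt_dec 0 (tbar N th i)) as [Ht|Ht].
  - rewrite <- (xlog_self (tbar N th i)).
    replace (tbar N th i) with (sumR N (fun j => tbar N th i * P i j)) at 2
      by (rewrite sumR_scal, HP2 by auto; ring).
    unfold tbar at 1. apply logsum.
    + intros j Hj. split. destruct HD as (H1&_); auto. split. apply Rmult_le_pos. lra. auto.
      intros Hp. destruct (pos_imp th i j HD Hi Hj Hp). apply Rmult_lt_0_compat; auto.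
    + exact Ht.
    + rewrite sumR_scal, HP2 by auto. lra.
  - assert (tbar N th i = 0) by (pose proof (tbar_nonneg th i HD Hi); lra).
    rewrite <- (sumR_zero N). right. apply sumR_ext. intros j Hj. rewrite xlog_npos. reflexivity.
    pose proof (le_tbar th i j HD Hi Hj). lra.
Qed.

Lemma Dkl_eq th : inDelta N P th -> Dkl N th P = - Hent N th - Lt N P th.
Proof. intros HD. unfold Dkl, Hent, Lt. rewrite Ropp_involutive.
  transitivity (sumR N (fun i => sumR N (fun j => xlog (th i j) (tbar N th i)) - sumR N (fun j => if Rlt_dec 0 (P i j) then th i j * ln (P i j) else 0))).
  2: rewrite sumR_sub; ring.
  apply sumR_ext. intros i Hi. rewrite <- sumR_sub. apply sumR_ext. intros j Hj.
  destruct (Rlt_dec 0 (th i j)) as [Hp|Hp].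
  - destruct (pos_imp th i j HD Hi Hj Hp) as [Ht HP].
    rewrite !xlog_pos by auto. destruct (Rlt_dec 0 (P i j)); [|lra].
    replace (th i j / (tbar N th i * P i j)) with ((th i j / tbar N th i) * / P i j) by (field; lra).
    rewrite ln_mult, ln_Rinv; try apply Rinv_0_lt_compat; try apply Rdiv_lt_0_compat; auto. ring.
  - rewrite !xlog_npos by auto. assert (th i j = 0) by (destruct HD as (H1&_); specialize (H1 i j Hi Hj); lra).
    rewrite H. destruct (Rlt_dec 0 (P i j)); ring.
Qed.

Lemma tbar_mix t a b i : tbar N (mix t a b) i = t * tbar N a i + (1 - t) * tbar N b i.
Proof. unfold tbar, mix. apply sumR_lin. Qed.

Lemma mix_inDelta t a b : 0 <= t <= 1 -> inDelta N P a -> inDelta N P b -> inDelta N P (mix t a b).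
Proof. intros Ht (A1&A2&A3&A4) (B1&B2&B3&B4). unfold mix. split; [|split; [|split]].
  - intros i j Hi Hj. specialize (A1 i j Hi Hj). specialize (B1 i j Hi Hj). nra.
  - transitivity (sumR N (fun i => t * sumR N (fun j => a i j) + (1-t) * sumR N (fun j => b i j))).
    apply sumR_ext; intros; apply sumR_lin.
    rewrite sumR_lin, A2, B2; ring.
  - intros i Hi. rewrite !sumR_lin. rewrite A3, B3 by auto. reflexivity.
  - intros i j Hi Hj Hn. rewrite A4, B4 by auto. ring.
Qed.
End D.

Lemma sumR2_lin N a b f g : sumR N (fun i => sumR N (fun j => a * f i j + b * g i j)) =
  a * sumR N (fun i => sumR N (fun j => f i j)) + b * sumR N (fun i => sumR N (fun j => g i j)).
Proof. rewrite <- sumR_lin. apply sumR_ext. intros. apply sumR_lin. Qed.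

Lemma sumR2_le N f g : (forall i j, (i < N)%nat -> (j < N)%nat -> f i j <= g i j) ->
  sumR N (fun i => sumR N (fun j => f i j)) <= sumR N (fun i => sumR N (fun j => g i j)).
Proof. intros H. apply sumR_le. intros. apply sumR_le. auto. Qed.

Section C.
Variables (N : nat) (P : nat -> nat -> R).

Lemma Hent_concave t a b : 0 <= t <= 1 -> inDelta N P a -> inDelta N P b ->
  t * Hent N a + (1 - t) * Hent N b <= Hent N (mix t a b).
Proof. intros Ht Ha Hb. unfold Hent.
  cut (sumR N (fun i => sumR N (fun j => xlog (mix t a b i j) (tbar N (mix t a b) i))) <=
       t * sumR N (fun i => sumR N (fun j => xlog (a i j) (tbar N a i))) + (1-t) * sumR N (fun i => sumR N (fun j => xlog (b i j) (tbar N b i)))).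
  lra.
  rewrite <- sumR2_lin. apply sumR2_le. intros i j Hi Hj. rewrite tbar_mix. unfold mix.
  apply xlog_convex; auto.
  - destruct Ha as (H&_); auto.
  - apply (tbar_nonneg N P); auto.
  - destruct Hb as (H&_); auto.
  - apply (tbar_nonneg N P); auto.
  - intros Hp. apply (pos_imp N P a i j); auto.
  - intros Hp. apply (pos_imp N P b i j); auto.
Qed.

Lemma Dkl_convex t a b : 0 <= t <= 1 -> inDelta N P a -> inDelta N P b -> row_stochastic N P ->
  Dkl N (mix t a b) P <= t * Dkl N a P + (1 - t) * Dkl N b P.
Proof. intros Ht Ha Hb [HP1 _]. unfold Dkl.
  rewrite <- sumR2_lin. apply sumR2_le. intros i j Hi Hj. rewrite tbar_mix. unfold mix.
  replace ((t * tbar N a i + (1 - t) * tbar N b i) * P i j) with (t * (tbar N a i * P i j) + (1-t) * (tbar N b i * P i j)) by ring.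
  apply xlog_convex; auto.
  - destruct Ha as (H&_); auto.
  - apply Rmult_le_pos; auto. apply (tbar_nonneg N P); auto.
  - destruct Hb as (H&_); auto.
  - apply Rmult_le_pos; auto. apply (tbar_nonneg N P); auto.
  - intros Hp. destruct (pos_imp N P a i j); auto. apply Rmult_lt_0_compat; auto.
  - intros Hp. destruct (pos_imp N P b i j); auto. apply Rmult_lt_0_compat; auto.
Qed.

Lemma Lt_mix t a b : Lt N P (mix t a b) = t * Lt N P a + (1 - t) * Lt N P b.
Proof. unfold Lt. rewrite <- sumR2_lin. apply sumR_ext; intros; apply sumR_ext; intros. unfold mix.
  destruct (Rlt_dec 0 (P i i0)); ring. Qed.

Lemma Rfun_mix beta t a b : Rfun N beta (mix t a b) = t * Rfun N beta a + (1 - t) * Rfun N beta b.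
Proof. unfold Rfun. rewrite <- sumR_lin. apply sumR_ext; intros. rewrite tbar_mix. field. Qed.

Lemma Rfun_nonneg beta th : inDelta N P th -> 0 <= Rfun N beta th.
Proof. intros HD. unfold Rfun. apply sumR_nonneg. intros i Hi. pose proof (tbar_nonneg N P th i HD Hi).
  pose proof (pow2_ge_0 (beta i)). nra. Qed.
End C.

Lemma sqrt_cs t R1 R2 H1 H2 : 0 <= t <= 1 -> 0 <= R1 -> 0 <= R2 -> 0 <= H1 -> 0 <= H2 ->
  t * (sqrt R1 * sqrt H1) + (1 - t) * (sqrt R2 * sqrt H2) <=
  sqrt (t * R1 + (1 - t) * R2) * sqrt (t * H1 + (1 - t) * H2).
Proof. intros Ht HR1 HR2 HH1 HH2.
  set (p := sqrt R1). set (q := sqrt R2). set (r := sqrt H1). set (u := sqrt H2).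
  assert (Ep : R1 = p * p) by (symmetry; apply sqrt_sqrt; auto).
  assert (Eq : R2 = q * q) by (symmetry; apply sqrt_sqrt; auto).
  assert (Er : H1 = r * r) by (symmetry; apply sqrt_sqrt; auto).
  assert (Eu : H2 = u * u) by (symmetry; apply sqrt_sqrt; auto).
  assert (0 <= p) by apply sqrt_pos. assert (0 <= q) by apply sqrt_pos.
  assert (0 <= r) by apply sqrt_pos. assert (0 <= u) by apply sqrt_pos.
  set (X := t * R1 + (1 - t) * R2). set (Y := t * H1 + (1 - t) * H2).
  assert (0 <= X) by (unfold X; nra). assert (0 <= Y) by (unfold Y; nra).
  assert (EX : sqrt X * sqrt X = X) by (apply sqrt_sqrt; auto).
  assert (EY : sqrt Y * sqrt Y = Y) by (apply sqrt_sqrt; auto).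
  assert (0 <= sqrt X) by apply sqrt_pos. assert (0 <= sqrt Y) by apply sqrt_pos.
  set (L := t * (p * r) + (1 - t) * (q * u)).
  assert (Hsq : L * L <= X * Y).
  { unfold L, X, Y. rewrite Ep, Eq, Er, Eu.
    assert (0 <= t * (1 - t) * ((p * u - q * r) * (p * u - q * r))).
    { destruct Ht. apply Rmult_le_pos. nra. pose proof (Rle_0_sqr (p * u - q * r)) as HH; unfold Rsqr in HH; lra. }
    assert (E : (t * (p * p) + (1 - t) * (q * q)) * (t * (r * r) + (1 - t) * (u * u)) =
      (t * (p * r) + (1 - t) * (q * u)) * (t * (p * r) + (1 - t) * (q * u)) + t * (1 - t) * ((p * u - q * r) * (p * u - q * r))) by ring.
    lra. }
  assert (0 <= sqrt X * sqrt Y) by nra.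
  assert ((sqrt X * sqrt Y) * (sqrt X * sqrt Y) = X * Y) by (transitivity ((sqrt X * sqrt X) * (sqrt Y * sqrt Y)); [ring| rewrite EX, EY; reflexivity]).
  fold L. nra.
Qed.

Lemma conv_obj_eq N P beta th : conv_obj N P beta th = - Lt N P th + Rfun N beta th - 2 * sqrt (Rfun N beta th) * sqrt (Hent N th).
Proof. reflexivity. Qed.

Definition S2 N beta th (xi : nat -> R) := sumR N (fun i => if Rlt_dec 0 (tbar N th i)
                   then tbar N th i * (beta i - xi i / tbar N th i) ^ 2 / 2 else 0).
Definition Jsum N th (xi : nat -> R) := sumR N (fun i => if Rlt_dec 0 (tbar N th i)
                   then (xi i) ^ 2 / (2 * tbar N th i) else 0).

Lemma zeta_obj_eq N P beta th xi : zeta_obj N P beta th xi = Dkl N th P + S2 N beta th xi.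
Proof. reflexivity. Qed.

Section E.
Variables (N : nat) (P : nat -> nat -> R) (beta : nat -> R).

Lemma S2_nonneg th xi : inDelta N P th -> 0 <= S2 N beta th xi.
Proof. intros HD. apply sumR_nonneg. intros i Hi. destruct (Rlt_dec 0 (tbar N th i)); [|lra].
  pose proof (pow2_ge_0 (beta i - xi i / tbar N th i)). assert (0 <= tbar N th i * (beta i - xi i / tbar N th i) ^ 2) by nra. lra. Qed.

Lemma choice_xi th c : inDelta N P th ->
  J_constraint N th (fun i => c * tbar N th i * beta i) \/ True ->
  Jsum N th (fun i => c * tbar N th i * beta i) = c ^ 2 * Rfun N beta th /\
  S2 N beta th (fun i => c * tbar N th i * beta i) = (1 - c) ^ 2 * Rfun N beta th.
Proof. intros HD _. unfold Jsum, S2, Rfun. rewrite <- !sumR_scal. split; apply sumR_ext; intros i Hi;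
  destruct (Rlt_dec 0 (tbar N th i)); try (field; lra);
  assert (tbar N th i = 0) by (pose proof (tbar_nonneg N P th i HD Hi); lra); rewrite H; field.
Qed.

Lemma choice_J th c : inDelta N P th -> c ^ 2 * Rfun N beta th <= Hent N th ->
  J_constraint N th (fun i => c * tbar N th i * beta i).
Proof. intros HD Hc. split. intros i Hi H0. rewrite H0. ring.
  destruct (choice_xi th c HD (or_intror I)) as [E _]. unfold Jsum in E. rewrite E. exact Hc. Qed.

Lemma S2_split th xi : inDelta N P th ->
  S2 N beta th xi = Rfun N beta th
     - sumR N (fun i => if Rlt_dec 0 (tbar N th i) then beta i * xi i else 0) + Jsum N th xi.
Proof. intros HD. unfold S2, Rfun, Jsum. rewrite <- sumR_sub, <- sumR_plus. apply sumR_ext. intros i Hi.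
  destruct (Rlt_dec 0 (tbar N th i)). field. lra.
  assert (tbar N th i = 0) by (pose proof (tbar_nonneg N P th i HD Hi); lra). rewrite H. field. Qed.

Lemma X_bound th xi s : inDelta N P th -> 0 < s ->
  sumR N (fun i => if Rlt_dec 0 (tbar N th i) then beta i * xi i else 0) <= s * Rfun N beta th + / s * Jsum N th xi.
Proof. intros HD Hs. unfold Rfun, Jsum. rewrite <- sumR_lin. apply sumR_le. intros i Hi.
  destruct (Rlt_dec 0 (tbar N th i)).
  - set (b := beta i) in *. set (x := xi i) in *. set (T := tbar N th i) in *.
    assert (E : s * (T * b ^ 2 / 2) + / s * (x ^ 2 / (2 * T)) - b * x = (s * T * b - x) ^ 2 / (2 * s * T)) by (field; lra).
    assert (0 <= (s * T * b - x) ^ 2 / (2 * s * T)).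
    { apply Rmult_le_pos. apply pow2_ge_0. left. apply Rinv_0_lt_compat. nra. }
    lra.
  - assert (tbar N th i = 0) by (pose proof (tbar_nonneg N P th i HD Hi); lra). rewrite H. lra.
Qed.

Lemma Jsum_nonneg th xi : inDelta N P th -> 0 <= Jsum N th xi.
Proof. intros HD. apply sumR_nonneg. intros i Hi. destruct (Rlt_dec 0 (tbar N th i)); [|lra].
  apply Rmult_le_pos. apply pow2_ge_0. left. apply Rinv_0_lt_compat. lra. Qed.
End E.

Lemma real_key Rv Hv Jv X : 0 <= Hv -> Hv <= Rv -> 0 <= Jv -> Jv <= Hv ->
  (forall s, 0 < s -> X <= s * Rv + / s * Jv) ->
  Rv + Hv - 2 * sqrt Rv * sqrt Hv <= Rv - X + Jv.
Proof. intros H0 HR J0 JH HX.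
  destruct (Req_dec Hv 0) as [Hz|Hnz].
  - subst Hv. rewrite sqrt_0. assert (Jv = 0) by lra. subst Jv.
    destruct (Rle_dec X 0). lra. exfalso.
    assert (0 < X / (2 * Rv + 1)) by (apply Rdiv_lt_0_compat; lra).
    specialize (HX _ H). rewrite Rmult_0_r, Rplus_0_r in HX.
    assert (X / (2 * Rv + 1) * Rv < X).
    { apply Rmult_lt_reg_r with (2 * Rv + 1). lra. replace (X / (2 * Rv + 1) * Rv * (2 * Rv + 1)) with (X * Rv) by (field; lra). nra. }
    lra.
  - set (a := sqrt Rv). set (b := sqrt Hv).
    assert (Ea : Rv = a * a) by (symmetry; apply sqrt_sqrt; lra).
    assert (Eb : Hv = b * b) by (symmetry; apply sqrt_sqrt; lra).
    assert (0 < b) by (unfold b; apply sqrt_lt_R0; lra).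
    assert (b <= a) by (unfold a, b; apply sqrt_le_1_alt; lra).
    assert (0 < a) by lra.
    specialize (HX (b / a) ltac:(apply Rdiv_lt_0_compat; lra)).
    replace (b / a * Rv) with (a * b) in HX by (rewrite Ea; field; lra).
    replace (/ (b / a) * Jv) with (Jv * a / b) in HX by (field; lra).
    assert (HXb : X * b <= a * b * b + Jv * a).
    { apply Rle_trans with ((a * b + Jv * a / b) * b). apply Rmult_le_compat_r; lra. right. field. lra. }
    rewrite Ea, Eb in *. 
    assert (Jv * (a - b) <= b * b * (a - b)) by (apply Rmult_le_compat_r; lra).
    nra.
Qed.

Lemma concave_root (h : R -> R) u0 :
  (forall b l, 0 <= b <= 1 -> 0 <= l <= 1 -> l * h b + (1 - l) * h 0 <= h (l * b)) ->
  0 < u0 <= 1 -> h u0 < 0 -> 0 < h 1 -> exists s, u0 <= s <= 1 /\ h s = 0.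
Proof. intros Hc Hu0 Hh0 Hh1.
  set (E := fun t => 0 <= t <= 1 /\ h t < 0).
  assert (Hb : bound E) by (exists 1; intros t [Ht _]; lra).
  assert (He : exists t, E t) by (exists u0; split; lra).
  destruct (completeness E Hb He) as [s [Hub Hlub]].
  assert (Hs1 : u0 <= s) by (apply Hub; split; lra).
  assert (Hs2 : s <= 1) by (apply Hlub; intros t [Ht _]; lra).
  set (c := Rabs (h 0)).
  assert (Hc0 : 0 <= c) by apply Rabs_pos.
  assert (Hc1 : - c <= h 0 <= c) by (unfold c; split; [pose proof (Rabs_Ropp (h 0)); pose proof (Rle_abs (- h 0)); lra|apply Rle_abs]).
  exists s. split; [lra|].
  destruct (Rtotal_order (h s) 0) as [Hlt|[Heq|Hgt]]; auto; exfalso.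
  -
    assert (Hs1' : s < 1) by (destruct (Req_dec s 1); [subst; lra| lra]).
    set (d := Rmin (1 - s) (s * (- h s) / (2 * (c + 1)))).
    assert (Hd0 : 0 < d).
    { unfold d. apply Rmin_glb_lt. lra. apply Rdiv_lt_0_compat; nra. }
    assert (Hd1 : d <= 1 - s) by apply Rmin_l.
    assert (Hd2 : d <= s * (- h s) / (2 * (c + 1))) by apply Rmin_r.
    set (t := s + d).
    assert (Ht : 0 <= h t).
    { destruct (Rlt_dec (h t) 0) as [Hn|Hn]; [|lra]. assert (t <= s) by (apply Hub; split; [unfold t; lra| exact Hn]). unfold t in H; lra. }
    assert (Hst : 0 < t) by (unfold t; lra). assert (Hst2 : s <= t) by (unfold t; lra).
    specialize (Hc t (s / t) ltac:(unfold t; lra) ltac:(split; [apply Rmult_le_pos; [lra| left; apply Rinv_0_lt_compat; lra]| apply Rmult_le_reg_r with t; [lra|]; unfold Rdiv; rewrite Rmult_assoc, Rinv_l; lra])).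
    replace (s / t * t) with s in Hc by (field; lra).
    replace (1 - s / t) with (d / t) in Hc by (unfold t; field; lra).
    assert (A1 : 0 <= s / t * h t) by (apply Rmult_le_pos; [apply Rmult_le_pos; [lra| left; apply Rinv_0_lt_compat; lra]| lra]).
    assert (A2 : - (d / t) * c <= d / t * h 0).
    { assert (0 <= d / t) by (apply Rmult_le_pos; [lra| left; apply Rinv_0_lt_compat; lra]). nra. }
    assert (A3 : d / t * c <= d / s * c).
    { apply Rmult_le_compat_r; auto. unfold Rdiv. apply Rmult_le_compat_l; [lra|]. apply Rinv_le_contravar; unfold t; lra. }
    assert (A4 : d / s * c <= (- h s) / (2 * (c + 1)) * c).
    { apply Rmult_le_compat_r; auto. apply Rmult_le_reg_r with s; [lra|].
      replace (d / s * s) with d by (field; lra). replace (- h s / (2 * (c + 1)) * s) with (s * - h s / (2 * (c + 1))) by (field; lra). lra. }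
    assert (A5 : (- h s) / (2 * (c + 1)) * c < - h s).
    { replace ((- h s) / (2 * (c + 1)) * c) with ((- h s) * (c / (2 * (c + 1)))) by (field; lra).
      assert (c / (2 * (c + 1)) < 1). { apply Rmult_lt_reg_r with (2 * (c + 1)); [lra|]. replace (c / (2 * (c + 1)) * (2 * (c + 1))) with c by (field; lra). lra. }
      nra. }
    lra.
  -
    assert (Hs0 : 0 < s) by lra.
    set (d := s * h s / (2 * (h s + c))).
    assert (Hd0 : 0 < d) by (apply Rdiv_lt_0_compat; nra).
    assert (Hex : exists t, E t /\ s - d < t).
    { apply NNPP. intros Hn. assert (s <= s - d). apply Hlub. intros t Et.
      destruct (Rle_dec t (s - d)); auto. exfalso. apply Hn. exists t. split; auto. lra. lra. }
    destruct Hex as [t [[Ht01 Hht] Htd]].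
    assert (Hts : t <= s) by (apply Hub; split; auto).
    specialize (Hc s (t / s) ltac:(lra) ltac:(split; [apply Rmult_le_pos; [lra| left; apply Rinv_0_lt_compat; lra]| apply Rmult_le_reg_r with s; [lra|]; unfold Rdiv; rewrite Rmult_assoc, Rinv_l; lra])).
    replace (t / s * s) with t in Hc by (field; lra).
    assert (B1 : t / s * h s + (1 - t / s) * h 0 < 0) by lra.
    assert (B2 : 0 <= 1 - t / s).
    { assert (t / s <= 1). apply Rmult_le_reg_r with s; [lra|]. replace (t / s * s) with t by (field; lra). lra. lra. }
    assert (B3 : - ((1 - t / s) * c) <= (1 - t / s) * h 0) by nra.
    assert (B4 : 1 - t / s < d / s).
    { apply Rmult_lt_reg_r with s; [lra|]. replace ((1 - t / s) * s) with (s - t) by (field; lra). replace (d / s * s) with d by (field; lra). lra. }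
    assert (B5 : t / s * h s < d / s * c) by nra.
    replace (d / s) with (h s / (2 * (h s + c))) in B4, B5 by (unfold d; field; split; lra).
    assert (B6 : 1 - h s / (2 * (h s + c)) < t / s) by lra.
    assert (B7 : h s / (2 * (h s + c)) * c < h s / 2).
    { replace (h s / (2 * (h s + c)) * c) with (h s / 2 * (c / (h s + c))) by (field; lra).
      assert (c / (h s + c) < 1). { apply Rmult_lt_reg_r with (h s + c); [lra|]. replace (c / (h s + c) * (h s + c)) with c by (field; lra). lra. }
      assert (0 < h s / 2) by lra. nra. }
    assert (B8 : h s / (2 * (h s + c)) <= 1 / 2).
    { apply Rmult_le_reg_r with (2 * (h s + c)); [lra|]. replace (h s / (2 * (h s + c)) * (2 * (h s + c))) with (h s) by (field; lra). lra. }
    assert (t / s * h s > h s / 2) by nra.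
    lra.
Qed.

Lemma ex_min1 n (f : nat -> R) : exists e, 0 < e /\ forall i, (i < n)%nat -> 0 < f i -> e <= f i.
Proof. induction n. exists 1. split. lra. intros; lia.
  destruct IHn as [e [He H]]. destruct (Rlt_dec 0 (f n)).
  - exists (Rmin e (f n)). split. apply Rmin_glb_lt; auto. intros i Hi Hf.
    destruct (Nat.eq_dec i n). subst. apply Rmin_r. apply Rle_trans with e. apply Rmin_l. apply H; auto. lia.
  - exists e. split; auto. intros i Hi Hf. destruct (Nat.eq_dec i n). subst; lra. apply H; auto; lia.
Qed.

Lemma ex_min2 n m (f : nat -> nat -> R) : exists e, 0 < e /\ forall i j, (i < n)%nat -> (j < m)%nat -> 0 < f i j -> e <= f i j.
Proof. induction n. exists 1. split. lra. intros; lia.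
  destruct IHn as [e [He H]]. destruct (ex_min1 m (f n)) as [e' [He' H']].
  exists (Rmin e e'). split. apply Rmin_glb_lt; auto. intros i j Hi Hj Hf.
  destruct (Nat.eq_dec i n). subst. apply Rle_trans with e'. apply Rmin_r. auto.
  apply Rle_trans with e. apply Rmin_l. apply H; auto. lia.
Qed.

Lemma mix_inDelta_gen N P t a b : (forall i j, (i < N)%nat -> (j < N)%nat -> 0 <= mix t a b i j) ->
  inDelta N P a -> inDelta N P b -> inDelta N P (mix t a b).
Proof. intros Hn (A1&A2&A3&A4) (B1&B2&B3&B4). split; [exact Hn|]. unfold mix. split; [|split].
  - transitivity (sumR N (fun i => t * sumR N (fun j => a i j) + (1-t) * sumR N (fun j => b i j))).
    apply sumR_ext; intros; apply sumR_lin.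
    rewrite sumR_lin, A2, B2; ring.
  - intros i Hi. rewrite !sumR_lin. rewrite A3, B3 by auto. reflexivity.
  - intros i j Hi Hj Hn'. rewrite A4, B4 by auto. ring.
Qed.

Lemma inf_exists (S : R -> Prop) : (exists x, S x) -> (exists l, forall x, S x -> l <= x) -> exists m, is_inf S m.
Proof. intros [x Hx] [l Hl]. set (E := fun y => S (- y)).
  assert (bound E) by (exists (- l); intros y Hy; specialize (Hl _ Hy); lra).
  assert (exists y, E y) by (exists (- x); unfold E; rewrite Ropp_involutive; auto).
  destruct (completeness E H H0) as [m [Hub Hlub]]. exists (- m). split.
  - intros z Hz. assert (E (- z)) by (unfold E; rewrite Ropp_involutive; auto). specialize (Hub _ H1). lra.
  - intros m' Hm'. assert (m <= - m'). apply Hlub. intros y Hy. specialize (Hm' _ Hy). lra. lra.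
Qed.

Section F.
Variables (N : nat) (P : nat -> nat -> R) (pi beta : nat -> R).
Hypothesis hP : row_stochastic N P.
Hypothesis hpi : stationary N P pi.

Definition rho := fun i j => pi i * P i j.

Lemma tbar_rho i : (i < N)%nat -> tbar N rho i = pi i.
Proof. intros Hi. unfold tbar, rho. rewrite sumR_scal. destruct hP as [_ H2]. rewrite H2 by auto. ring. Qed.

Lemma rho_in : inDelta N P rho.
Proof. destruct hP as [H1 H2]. destruct hpi as (S1&S2&S3). unfold rho. split; [|split; [|split]].
  - intros i j Hi Hj. apply Rmult_le_pos; auto. left; auto.
  - rewrite <- S2. apply sumR_ext. intros i Hi. rewrite sumR_scal, H2 by auto. ring.
  - intros i Hi. rewrite sumR_scal, H2, S3 by auto. ring.
  - intros i j Hi Hj Hn. assert (P i j = 0) by (specialize (H1 i j Hi Hj); lra). rewrite H. ring.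
Qed.

Lemma Dkl_rho : Dkl N rho P = 0.
Proof. unfold Dkl. rewrite <- (sumR_zero N). apply sumR_ext. intros i Hi. rewrite <- (sumR_zero N). apply sumR_ext. intros j Hj.
  rewrite tbar_rho by auto. unfold rho. apply xlog_self. Qed.

Lemma Rfun_rho : Rfun N beta rho = sumR N (fun i => pi i * (beta i) ^ 2 / 2).
Proof. unfold Rfun. apply sumR_ext. intros. rewrite tbar_rho; auto. Qed.

Lemma zeta_nonneg z : zeta_values N P beta z -> 0 <= z.
Proof. intros (th & xi & HD & HJ & ->). rewrite zeta_obj_eq.
  pose proof (Dkl_nonneg N P th hP HD). pose proof (S2_nonneg N P beta th xi HD). lra. Qed.

Lemma sq_facts Rv Hv : 0 <= Rv -> 0 <= Hv -> 0 <= Rv + Hv - 2 * sqrt Rv * sqrt Hv.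
Proof. intros. pose proof (sqrt_sqrt Rv H). pose proof (sqrt_sqrt Hv H0).
  replace (Rv + Hv - 2 * sqrt Rv * sqrt Hv) with ((sqrt Rv - sqrt Hv) * (sqrt Rv - sqrt Hv)) by nra.
  apply Rle_0_sqr. Qed.

Lemma K2 th : inDelta N P th -> exists z, zeta_values N P beta z /\ z <= conv_obj N P beta th.
Proof. intros HD. pose proof (Rfun_nonneg N P beta th HD) as HR. pose proof (Hent_nonneg N P th HD) as HH.
  set (Rv := Rfun N beta th) in *. set (Hv := Hent N th) in *.
  assert (ED := Dkl_eq N P th HD).
  destruct (Rle_dec Rv Hv) as [Hle|Hgt].
  - exists (zeta_obj N P beta th (fun i => 1 * tbar N th i * beta i)). split.
    + exists th, (fun i => 1 * tbar N th i * beta i). split; auto. split; auto. apply (choice_J N P beta); auto. fold Rv Hv. lra.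
    + rewrite zeta_obj_eq. destruct (choice_xi N P beta th 1 HD (or_intror I)) as [_ E2]. rewrite E2.
      rewrite conv_obj_eq. fold Rv Hv. rewrite ED. fold Hv. pose proof (sq_facts Rv Hv HR HH). nra.
  - assert (0 < Rv) by lra. assert (0 < sqrt Rv) by (apply sqrt_lt_R0; auto).
    set (c := sqrt Hv / sqrt Rv).
    assert (ER : sqrt Rv * sqrt Rv = Rv) by (apply sqrt_sqrt; lra).
    assert (EH : sqrt Hv * sqrt Hv = Hv) by (apply sqrt_sqrt; lra).
    assert (Ec2 : c ^ 2 * Rv = Hv).
    { unfold c. set (a := sqrt Rv) in *. set (b := sqrt Hv) in *. rewrite <- ER, <- EH. field. lra. }
    assert (Ec1 : c * Rv = sqrt Rv * sqrt Hv).
    { unfold c. set (a := sqrt Rv) in *. set (b := sqrt Hv) in *. rewrite <- ER. field. lra. }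
    exists (zeta_obj N P beta th (fun i => c * tbar N th i * beta i)). split.
    + exists th, (fun i => c * tbar N th i * beta i). split; auto. split; auto. apply (choice_J N P beta); auto. fold Rv Hv. lra.
    + rewrite zeta_obj_eq. destruct (choice_xi N P beta th c HD (or_intror I)) as [_ E2]. rewrite E2.
      rewrite conv_obj_eq. fold Rv Hv. rewrite ED. fold Hv.
      replace ((1 - c) ^ 2 * Rv) with (Rv - 2 * (c * Rv) + c ^ 2 * Rv) by ring. rewrite Ec1, Ec2. lra.
Qed.
End F.

Section G.
Variables (N : nat) (P : nat -> nat -> R) (pi beta : nat -> R).
Hypothesis hP : row_stochastic N P.
Hypothesis hpi : stationary N P pi.

Lemma K1 th xi : inDelta N P th -> J_constraint N th xi -> Hent N th <= Rfun N beta th ->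
  conv_obj N P beta th <= zeta_obj N P beta th xi.
Proof. intros HD [_ HJ] Hle. rewrite zeta_obj_eq, conv_obj_eq, (Dkl_eq N P th HD), (S2_split N P beta th xi HD).
  pose proof (Hent_nonneg N P th HD). pose proof (Jsum_nonneg N P th xi HD).
  pose proof (real_key (Rfun N beta th) (Hent N th) (Jsum N th xi)
     (sumR N (fun i => if Rlt_dec 0 (tbar N th i) then beta i * xi i else 0)) H Hle H0 HJ
     (fun s Hs => X_bound N P beta th xi s HD Hs)). lra.
Qed.

Lemma theta_le1 th i j : inDelta N P th -> (i < N)%nat -> (j < N)%nat -> th i j <= 1.
Proof. intros HD Hi Hj. apply Rle_trans with (tbar N th i). apply (le_tbar N P); auto.
  destruct HD as (H1&H2&_). rewrite <- H2. unfold tbar.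
  apply (sumR_ge_term N (fun i => sumR N (fun j => th i j))); auto. intros. apply sumR_nonneg. auto. Qed.

Lemma construct th : Hent N (rho P pi) < Rfun N beta (rho P pi) ->
  inDelta N P th -> Rfun N beta th < Hent N th ->
  exists th', inDelta N P th' /\ conv_obj N P beta th' <= Dkl N th P.
Proof. intros Hcase HD Hlt.
  set (rh := rho P pi) in *.
  assert (Hrh : inDelta N P rh) by (apply rho_in; auto).
  destruct (ex_min2 N N rh) as [e [He Hemin]].
  set (rh' := mix (- e) th rh).
  assert (Hrh' : inDelta N P rh').
  { apply mix_inDelta_gen; auto. intros i j Hi Hj. unfold mix.
    destruct (Rlt_dec 0 (rh i j)) as [Hp|Hp].
    - specialize (Hemin i j Hi Hj Hp). pose proof (theta_le1 th i j HD Hi Hj). destruct HD as (H1&_). specialize (H1 i j Hi Hj). nra.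
    - assert (rh i j = 0). { destruct Hrh as (H1&_). specialize (H1 i j Hi Hj). lra. }
      assert (th i j = 0). { destruct HD as (_&_&_&H4). apply H4; auto. intros HPp. apply Hp. unfold rh, rho.
        apply Rmult_lt_0_compat; auto. destruct hpi as (S1&_); auto. }
      rewrite H, H0. lra. }
  set (mu := fun u => mix u th rh').
  assert (Hmu : forall u, 0 <= u <= 1 -> inDelta N P (mu u)) by (intros; apply mix_inDelta; auto).
  set (h := fun u => Hent N (mu u) - Rfun N beta (mu u)).
  assert (Hconc : forall b l, 0 <= b <= 1 -> 0 <= l <= 1 -> l * h b + (1 - l) * h 0 <= h (l * b)).
  { intros b l Hb Hl. unfold h.
    assert (E : mu (l * b) = mix l (mu b) (mu 0)).
    { unfold mu, mix. apply functional_extensionality; intro i. apply functional_extensionality; intro j. ring. }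
    rewrite E, Rfun_mix. pose proof (Hent_concave N P l (mu b) (mu 0) Hl (Hmu b Hb) (Hmu 0 ltac:(lra))). lra. }
  set (u0 := e / (1 + e)).
  assert (Hu0 : 0 < u0 <= 1).
  { unfold u0. split. apply Rdiv_lt_0_compat; lra. apply Rmult_le_reg_r with (1 + e). lra.
    replace (e / (1 + e) * (1 + e)) with e by (field; lra). lra. }
  assert (Emu0 : mu u0 = rh).
  { unfold mu, mix, rh', mix, u0. apply functional_extensionality; intro i. apply functional_extensionality; intro j. field. lra. }
  assert (Emu1 : mu 1 = th).
  { unfold mu, mix. apply functional_extensionality; intro i. apply functional_extensionality; intro j. ring. }
  assert (Hh0 : h u0 < 0) by (unfold h; rewrite Emu0; lra).
  assert (Hh1 : 0 < h 1) by (unfold h; rewrite Emu1; lra).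
  destruct (concave_root h u0 Hconc Hu0 Hh0 Hh1) as [s [Hs Hhs]].
  set (lam := s * (1 + e) - e).
  assert (Hlam : 0 <= lam <= 1).
  { unfold lam. split. destruct Hs as [Hs _]. unfold u0 in Hs.
    assert (e <= s * (1 + e)). { apply Rle_trans with (e / (1 + e) * (1 + e)). right; field; lra. apply Rmult_le_compat_r; lra. }
    lra. nra. }
  assert (Emus : mu s = mix lam th rh).
  { unfold mu, mix, rh', mix, lam. apply functional_extensionality; intro i. apply functional_extensionality; intro j. ring. }
  exists (mu s). split. apply Hmu; lra.
  assert (HeqRH : Hent N (mu s) = Rfun N beta (mu s)) by (unfold h in Hhs; lra).
  rewrite conv_obj_eq. rewrite <- HeqRH.
  assert (HDs : inDelta N P (mu s)) by (apply Hmu; lra).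
  pose proof (Hent_nonneg N P (mu s) HDs).
  assert (Esq : 2 * sqrt (Hent N (mu s)) * sqrt (Hent N (mu s)) = 2 * Hent N (mu s)) by (rewrite Rmult_assoc, sqrt_sqrt; auto). rewrite Esq.
  pose proof (Dkl_eq N P (mu s) HDs).
  assert (Dkl N (mu s) P <= Dkl N th P).
  { rewrite Emus. pose proof (Dkl_convex N P lam th rh Hlam HD Hrh hP).
    unfold rh in H1 at 2. rewrite Dkl_rho in H1 by auto. pose proof (Dkl_nonneg N P th hP HD). nra. }
  lra.
Qed.
End G.

Theorem lemma10 (N : nat) (P : nat -> nat -> R) (pi beta : nat -> R)
  (hP : row_stochastic N P) (hirr : irreducible N P) (hap : aperiodic N P)
  (hpi : stationary N P pi) :
  (exists z, is_inf (zeta_values N P beta) z) /\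
  forall zeta, is_inf (zeta_values N P beta) zeta ->
    (HP N P pi >= sumR N (fun i => pi i * (beta i) ^ 2 / 2) -> zeta = 0) /\
    (~ (HP N P pi >= sumR N (fun i => pi i * (beta i) ^ 2 / 2)) ->
       is_inf (conv_values N P beta) zeta /\
       (forall th1 th2 t, inDelta N P th1 -> inDelta N P th2 -> 0 <= t <= 1 ->
          inDelta N P (mix t th1 th2) /\
          conv_obj N P beta (mix t th1 th2)
            <= t * conv_obj N P beta th1 + (1 - t) * conv_obj N P beta th2)).
Proof.
  assert (Hrh := rho_in N P pi hP hpi).
  assert (HRr := Rfun_rho N P pi beta hP).
  assert (HHr : HP N P pi = Hent N (rho P pi)) by reflexivity.
  split.
  { apply inf_exists.
    - destruct (K2 N P beta (rho P pi) Hrh) as [z [Hz _]]. exists z; auto.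
    - exists 0. apply zeta_nonneg; auto. }
  intros zeta [Hzlb Hzglb]. split.
  - intros Hge.
    assert (H0 : zeta_values N P beta 0).
    { exists (rho P pi), (fun i => 1 * tbar N (rho P pi) i * beta i). split; auto. split.
      apply (choice_J N P beta); auto. rewrite HRr, <- HHr. lra.
      rewrite zeta_obj_eq. destruct (choice_xi N P beta (rho P pi) 1 Hrh (or_intror I)) as [_ E2]. rewrite E2.
      rewrite Dkl_rho by auto. ring. }
    specialize (Hzlb 0 H0). assert (0 <= zeta) by (apply Hzglb; apply zeta_nonneg; auto). lra.
  - intros Hlt. split; [split|].
    + intros g [th [HD ->]]. destruct (K2 N P beta th HD) as [z [Hz Hle]]. specialize (Hzlb z Hz). lra.
    + intros m' Hm'. apply Hzglb. intros z (th & xi & HD & HJ & ->).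
      destruct (Rle_dec (Hent N th) (Rfun N beta th)) as [Hle|Hgt].
      * pose proof (K1 N P beta th xi HD HJ Hle). assert (m' <= conv_obj N P beta th) by (apply Hm'; exists th; auto). lra.
      * destruct (construct N P pi beta hP hpi th ltac:(rewrite HRr, <- HHr; lra) HD ltac:(lra)) as [th' [HD' Hc]].
        assert (m' <= conv_obj N P beta th') by (apply Hm'; exists th'; auto).
        rewrite zeta_obj_eq. pose proof (S2_nonneg N P beta th xi HD). lra.
    + intros th1 th2 t H1 H2 Ht. split. apply mix_inDelta; auto.
      rewrite !conv_obj_eq, Lt_mix, Rfun_mix.
      pose proof (Hent_concave N P t th1 th2 Ht H1 H2).
      pose proof (Hent_nonneg N P th1 H1). pose proof (Hent_nonneg N P th2 H2).
      pose proof (Rfun_nonneg N P beta th1 H1). pose proof (Rfun_nonneg N P beta th2 H2).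
      pose proof (sqrt_cs t (Rfun N beta th1) (Rfun N beta th2) (Hent N th1) (Hent N th2) Ht H4 H5 H0 H3).
      assert (sqrt (t * Hent N th1 + (1 - t) * Hent N th2) <= sqrt (Hent N (mix t th1 th2))).
      { apply sqrt_le_1_alt. auto. }
      assert (0 <= sqrt (t * Rfun N beta th1 + (1 - t) * Rfun N beta th2)) by apply sqrt_pos.
      assert (sqrt (t * Rfun N beta th1 + (1 - t) * Rfun N beta th2) * sqrt (t * Hent N th1 + (1 - t) * Hent N th2)
        <= sqrt (t * Rfun N beta th1 + (1 - t) * Rfun N beta th2) * sqrt (Hent N (mix t th1 th2))).
      { apply Rmult_le_compat_l; auto. }
      nra.
Qed.
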